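(* Let $E_3$ be the exceptional simple Jordan algebra of $3\times3$ Hermitian matrices over the complex octonions, and let $L(E_3)=U_{-1}\oplus U_0\oplus U_1$ be its associated graded Lie algebra, which is the simple Lie algebra of type $E_7$ with its $3$-grading. Then $L(E_3)$ has no $2$-graded representation $\rho$ with $\rho(U_{-1})\neq 0$.
   Context: $L(A)$ for a Jordan algebra $A$ (product $*$) is $U_{-1}\oplus U_0\oplus U_1$ with $U_{-1}$ the space of $A$, $U_0=\mathrm{span}\{L_a,[L_a,L_b]\}$ ($L_a(x)=a*x$), $U_1=\mathrm{span}\{\bar A, A_a\}$ where $\bar A(x,y)=x*y$, $A_a(x,y)=(x*a)*y+(y*a)*x-a*(x*y)$, with skew bracket $[U_{-1},U_{-1}]=0=[U_1,U_1]$, $[S,a]=S(a)$, $[S_1,S_2]=S_1S_2-S_2S_1$, $[B,a]=(y\mapsto B(a,y))$, $[S,B]=((x,y)\mapsto S(B(x,y))-B(Sx,y)-B(x,Sy))$. A representation $\rho$ of a graded Lie algebra $G=\bigoplus U_i$ on $V$ is $l$-graded if $V=V_1\oplus\dots\oplus V_l$ with all $V_j\neq0$ and $\rho(U_i)V_j\subset V_{i+j}$ ($V_k=0$ for $k\notin\{1,\dots,l\}$). *)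

(* Defs.v *)
From mathcomp Require Import all_boot all_algebra.
From mathcomp Require Import complex.
From mathcomp Require Import Rstruct.
Set Implicit Arguments. Unset Strict Implicit. Unset Printing Implicit Defensive.
Import GRing.Theory.
Local Open Scope ring_scope.

Definition Cc : fieldType := (Rdefinitions.R)[i].

(*   (a,b)(c,d) = (ac - conj(d) b, d a + b conj(c)),  conj(a,b) = (conj a, -b) *)
Section CayleyDickson.
Variable K : fieldType.

Record cdalg (T : Type) := CDAlg {
  cd0 : T; cd1 : T; cdadd : T -> T -> T; cdopp : T -> T;
  cdmul : T -> T -> T; cdconj : T -> T; cdscale : K -> T -> T }.

Definition cd_base : cdalg K :=
  @CDAlg K 0 1 +%R -%R *%R id *%R.

Definition cd_double T (o : cdalg T) : cdalg (T * T) :=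
  @CDAlg (T * T) (cd0 o, cd0 o) (cd1 o, cd0 o)
    (fun x y => (cdadd o x.1 y.1, cdadd o x.2 y.2))
    (fun x => (cdopp o x.1, cdopp o x.2))
    (fun x y => (cdadd o (cdmul o x.1 y.1) (cdopp o (cdmul o (cdconj o y.2) x.2)),
                 cdadd o (cdmul o y.2 x.1) (cdmul o x.2 (cdconj o y.1))))
    (fun x => (cdconj o x.1, cdopp o x.2))
    (fun k x => (cdscale o k x.1, cdscale o k x.2)).

Definition Oct := (((K * K) * (K * K)) * ((K * K) * (K * K)))%type.
Definition octA : cdalg Oct := cd_double (cd_double (cd_double cd_base)).

Definition oadd := cdadd octA.
Definition omul := cdmul octA.
Definition oconj := cdconj octA.
Definition oscale := cdscale octA.
Definition o0 := cd0 octA.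
Definition oC (k : K) : Oct := oscale k (cd1 octA).

Definition mkOct (f : nat -> K) : Oct :=
  (((f 0%N, f 1%N), (f 2%N, f 3%N)), ((f 4%N, f 5%N), (f 6%N, f 7%N))).
Definition octCoord (x : Oct) (k : nat) : K :=
  match x with (((a0, a1), (a2, a3)), ((a4, a5), (a6, a7))) =>
    nth 0 [:: a0; a1; a2; a3; a4; a5; a6; a7] k end.

(* The Albert algebra E_3 = 3x3 Hermitian matrices over the octonions  *)
(* over K, with Jordan product X o Y = (XY + YX)/2.  A Hermitian matrix *)
(*      [ d0      x3     x2^  ]                                          *)
(*      [ x3^     d1     x1  ]                                          *)
(*      [ x2      x1^    d2  ]                                          *)
(* (x^ = octonion conjugate) is encoded by its 27 coordinates: d0 d1 d2 *)
(* (indices 0..2), then the                                            *)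
(* coordinates of x1 (3..10), x2 (11..18), x3 (19..26).                 *)
Definition E3 := 'rV[K]_27.

Definition OMat := 'I_3 -> 'I_3 -> Oct.

Definition vc (v : E3) (k : nat) : K := v ord0 (inord k).

Definition herm (v : E3) : OMat := fun i j =>
  let x1 := mkOct (fun k => vc v (3 + k)) in
  let x2 := mkOct (fun k => vc v (11 + k)) in
  let x3 := mkOct (fun k => vc v (19 + k)) in
  match nat_of_ord i, nat_of_ord j with
  | 0, 0 => oC (vc v 0) | 1, 1 => oC (vc v 1) | 2, 2 => oC (vc v 2)
  | 1, 2 => x1 | 2, 1 => oconj x1
  | 2, 0 => x2 | 0, 2 => oconj x2
  | 0, 1 => x3 | 1, 0 => oconj x3
  | _, _ => o0
  end%N.

Definition unherm (M : OMat) : E3 :=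
  \row_(i < 27)
    (if (i < 3)%N then octCoord (M (inord i) (inord i)) 0
     else if (i < 11)%N then octCoord (M (inord 1) (inord 2)) (i - 3)
     else if (i < 19)%N then octCoord (M (inord 2) (inord 0)) (i - 11)
     else octCoord (M (inord 0) (inord 1)) (i - 19)).

Definition omatmul (X Y : OMat) : OMat := fun i j =>
  oadd (omul (X i (inord 0)) (Y (inord 0) j))
    (oadd (omul (X i (inord 1)) (Y (inord 1) j))
          (omul (X i (inord 2)) (Y (inord 2) j))).

Definition E3prod (u v : E3) : E3 :=
  let X := herm u in let Y := herm v in
  unherm (fun i j => oscale (1 / 2%:R) (oadd (omatmul X Y i j) (omatmul Y X i j))).

End CayleyDickson.

Section LieConstruction.
Variables (K : fieldType) (A : lmodType K) (jp : A -> A -> A).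

Definition Lmul (a : A) : A -> A := fun x => jp a x.
Definition fcomm (S T : A -> A) : A -> A := fun x => S (T x) - T (S x).
Definition Abar : A -> A -> A := fun x y => jp x y.
Definition Aa (a : A) : A -> A -> A :=
  fun x y => jp (jp x a) y + jp (jp y a) x - jp a (jp x y).

Definition inU0 (S : A -> A) : Prop :=
  exists (r1 : seq (K * A)) (r2 : seq (K * A * A)), forall x,
    S x = \sum_(p <- r1) p.1 *: Lmul p.2 x
        + \sum_(p <- r2) p.1.1 *: fcomm (Lmul p.1.2) (Lmul p.2) x.

Definition inU1 (B : A -> A -> A) : Prop :=
  exists (r1 : seq K) (r2 : seq (K * A)), forall x y,
    B x y = \sum_(c <- r1) c *: Abar x y + \sum_(p <- r2) p.1 *: Aa p.2 x y.

(* elements a + S + B of U_{-1} (+) U_0 (+) U_1 *)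
Record Lel := mkL { lm : A; l0 : A -> A; l1 : A -> A -> A }.

Definition inL (x : Lel) : Prop := inU0 (l0 x) /\ inU1 (l1 x).

Definition Ladd (x y : Lel) : Lel :=
  mkL (lm x + lm y) (fun z => l0 x z + l0 y z) (fun u w => l1 x u w + l1 y u w).
Definition Lscale (c : K) (x : Lel) : Lel :=
  mkL (c *: lm x) (fun z => c *: l0 x z) (fun u w => c *: l1 x u w).

Definition SBbr (S : A -> A) (B : A -> A -> A) : A -> A -> A :=
  fun x y => S (B x y) - B (S x) y - B x (S y).
Definition BAbr (B : A -> A -> A) (a : A) : A -> A := fun y => B a y.

(* skew bracket extended bilinearly, [U_{-1},U_{-1}] = 0 = [U_1,U_1] *)
Definition Lbr (x y : Lel) : Lel :=
  mkL (l0 x (lm y) - l0 y (lm x))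
      (fun z => fcomm (l0 x) (l0 y) z + BAbr (l1 x) (lm y) z - BAbr (l1 y) (lm x) z)
      (fun u w => SBbr (l0 x) (l1 y) u w - SBbr (l0 y) (l1 x) u w).

Definition zf : A -> A := fun _ => 0.
Definition zb : A -> A -> A := fun _ _ => 0.

Definition homog (i : int) (x : Lel) : Prop :=
  (i = -1 /\ exists a, x = mkL a zf zb)
  \/ (i = 0 /\ exists S, inU0 S /\ x = mkL 0 S zb)
  \/ (i = 1 /\ exists B, inU1 B /\ x = mkL 0 zf B).

Variable V : lmodType K.

Definition is_rep (rho : Lel -> V -> V) : Prop :=
  (forall x, inL x -> forall (c : K) (u w : V),
      rho x (c *: u + w) = c *: rho x u + rho x w)
  /\ (forall x y (c : K), inL x -> inL y -> forall v,
      rho (Ladd (Lscale c x) y) v = c *: rho x v + rho y v)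
  /\ (forall x y, inL x -> inL y -> forall v,
      rho (Lbr x y) v = rho x (rho y v) - rho y (rho x v)).

Definition subspace (P : V -> Prop) : Prop :=
  P 0 /\ forall (c : K) u w, P u -> P w -> P (c *: u + w).

Definition Vext (l : nat) (W : nat -> V -> Prop) (k : int) : V -> Prop :=
  if (1 <= k) && (k <= l%:Z) then W `|k|%N else (fun v => v = 0).

Definition graded_rep (l : nat) (W : nat -> V -> Prop) (rho : Lel -> V -> V) : Prop :=
  is_rep rho
  /\ (forall j, (1 <= j <= l)%N -> subspace (W j) /\ exists v, W j v /\ v <> 0)
  /\ (forall v, exists vs : nat -> V,
        (forall j, (1 <= j <= l)%N -> W j (vs j)) /\ v = \sum_(1 <= j < l.+1) vs j)
  /\ (forall vs : nat -> V, (forall j, (1 <= j <= l)%N -> W j (vs j)) ->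
        \sum_(1 <= j < l.+1) vs j = 0 -> forall j, (1 <= j <= l)%N -> vs j = 0)
  /\ (forall (i : int) x, homog i x -> forall j v, (1 <= j <= l)%N -> W j v ->
        Vext l W (i + j%:Z) (rho x v)).

End LieConstruction.

(* Main.v *)
Require Import Defs.
From mathcomp Require Import all_boot all_algebra.
From mathcomp Require Import complex Rstruct ring.
From Stdlib Require Import ClassicalEpsilon FunctionalExtensionality.
Set Implicit Arguments. Unset Strict Implicit. Unset Printing Implicit Defensive.
Local Open Scope ring_scope.
Import GRing.Theory Num.Theory.

(* Proof strategy: a 2-graded representation yields a
   special (associative) representation of the Albert algebra on V_2; the
   Peirce decomposition w.r.t. the diagonal idempotents together with a
   non-associative triple of octonion units forces it to vanish, hence
   rho(U_{-1}) = 0. *)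

Section OctLin.
Variable K : fieldType.
Implicit Types (x y z a b : Oct K) (c : K).

Ltac dst x := case: x => [[[? ?] [? ?]] [[? ?] [? ?]]].
Ltac octring := rewrite /oC /o0 /mkOct /oadd /omul /oscale /oconj /=; congr (((_,_),(_,_)),((_,_),(_,_))); ring.

Lemma O3L c (a1 a2 a3 b1 b2 b3 y1 y2 y3 : Oct K) :
  oadd (omul (oadd (oscale c a1) b1) y1) (oadd (omul (oadd (oscale c a2) b2) y2) (omul (oadd (oscale c a3) b3) y3))
  = oadd (oscale c (oadd (omul a1 y1) (oadd (omul a2 y2) (omul a3 y3))))
         (oadd (omul b1 y1) (oadd (omul b2 y2) (omul b3 y3))).
Proof.
dst a1; dst a2; dst a3; dst b1; dst b2; dst b3; dst y1; dst y2; dst y3.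
octring.
Qed.

Lemma O3R c (a1 a2 a3 b1 b2 b3 y1 y2 y3 : Oct K) :
  oadd (omul y1 (oadd (oscale c a1) b1)) (oadd (omul y2 (oadd (oscale c a2) b2)) (omul y3 (oadd (oscale c a3) b3)))
  = oadd (oscale c (oadd (omul y1 a1) (oadd (omul y2 a2) (omul y3 a3))))
         (oadd (omul y1 b1) (oadd (omul y2 b2) (omul y3 b3))).
Proof.
dst a1; dst a2; dst a3; dst b1; dst b2; dst b3; dst y1; dst y2; dst y3.
octring.
Qed.

Lemma Ocomb h c (a a' b b' : Oct K) :
  oscale h (oadd (oadd (oscale c a) b) (oadd (oscale c a') b')) =
  oadd (oscale c (oscale h (oadd a a'))) (oscale h (oadd b b')).
Proof. dst a; dst a'; dst b; dst b'; octring. Qed.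

Lemma vcZD c (u w : E3 K) m : vc (c *: u + w) m = c * vc u m + vc w m.
Proof. by rewrite /vc !mxE. Qed.
Lemma vc0 m : vc (0 : E3 K) m = 0.
Proof. by rewrite /vc !mxE. Qed.

Lemma hermZD c (u w : E3 K) i j :
  herm (c *: u + w) i j = oadd (oscale c (herm u i j)) (herm w i j).
Proof.
rewrite /herm; case: i => [[|[|[|i]]] Hi] /=; case: j => [[|[|[|j]]] Hj] /=;
  rewrite /mkOct /= ?vcZD; octring.
Qed.

Lemma herm0 i j : herm (0 : E3 K) i j = o0 K.
Proof.
rewrite /herm; case: i => [[|[|[|i]]] Hi] /=; case: j => [[|[|[|j]]] Hj] /=;
  rewrite /mkOct /= ?vc0; octring.
Qed.

Lemma octCoordZD c x y k : octCoord (oadd (oscale c x) y) k = c * octCoord x k + octCoord y k.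
Proof.
dst x; dst y; rewrite /oadd /oscale /=.
do 8 (case: k => [|k]; first by []); by rewrite /= !nth_nil mulr0 addr0.
Qed.

Lemma octCoord0 k : octCoord (o0 K) k = 0.
Proof. by do 8 (case: k => [|k]; first by []); rewrite /= nth_nil. Qed.

Lemma unherm_ext (M N : OMat K) : (forall i j, M i j = N i j) -> unherm M = unherm N.
Proof. by move=> H; apply/rowP => i; rewrite !mxE !H. Qed.

Lemma unhermZD c (M N : OMat K) :
  unherm (fun i j => oadd (oscale c (M i j)) (N i j)) = c *: unherm M + unherm N.
Proof. apply/rowP => i; rewrite !mxE; by case: ifP => _; [|case: ifP => _; [|case: ifP => _]]; rewrite octCoordZD. Qed.

Lemma unherm0 : unherm (fun _ _ => o0 K) = 0.
Proof. apply/rowP => i; rewrite !mxE; by case: ifP => _; [|case: ifP => _; [|case: ifP => _]]; rewrite octCoord0. Qed.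

Lemma E3prodZDl c (u w v : E3 K) : E3prod (c *: u + w) v = c *: E3prod u v + E3prod w v.
Proof.
rewrite /E3prod -unhermZD; apply: unherm_ext => i j.
rewrite /omatmul !hermZD O3L O3R; exact: Ocomb.
Qed.

Lemma omul0 x : omul x (o0 K) = o0 K.
Proof. dst x; octring. Qed.
Lemma omul0l x : omul (o0 K) x = o0 K.
Proof. dst x; octring. Qed.
Lemma oadd0 : oadd (o0 K) (o0 K) = o0 K.
Proof. octring. Qed.
Lemma osc0 c : oscale c (o0 K) = o0 K.
Proof. octring. Qed.

Lemma E3prod0r (u : E3 K) : E3prod u 0 = 0.
Proof.
transitivity (unherm (fun _ _ => o0 K)); last exact: unherm0.
rewrite /E3prod; apply: unherm_ext => i j /=.
by rewrite /omatmul !herm0 !omul0 !omul0l !oadd0 osc0.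
Qed.

Lemma E3prod0l (u : E3 K) : E3prod 0 u = 0.
Proof.
have := E3prodZDl 1 0 0 u; rewrite !scale1r addr0 => H.
by apply: (addrI (E3prod 0 u)); rewrite addr0 -H.
Qed.
End OctLin.


Definition o3 (n : nat) : 'I_3 :=
  match n with 0 => @Ordinal 3 0 isT | 1 => @Ordinal 3 1 isT | _ => @Ordinal 3 2 isT end.
Lemma inord_o3 n : (n < 3)%N -> inord n = o3 n.
Proof. by move=> h; apply: val_inj; rewrite /= inordK //; case: n h => [|[|[|n]]]. Qed.

Section F.
Variable K : fieldType.
Definition hermF (f : nat -> K) : OMat K := fun i j =>
  let x1 := mkOct (fun k => f (3 + k)%N) in
  let x2 := mkOct (fun k => f (11 + k)%N) in
  let x3 := mkOct (fun k => f (19 + k)%N) in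
  match nat_of_ord i, nat_of_ord j with
  | 0, 0 => oC (f 0%N) | 1, 1 => oC (f 1%N) | 2, 2 => oC (f 2%N)
  | 1, 2 => x1 | 2, 1 => oconj x1
  | 2, 0 => x2 | 0, 2 => oconj x2
  | 0, 1 => x3 | 1, 0 => oconj x3
  | _, _ => o0 K
  end%N.
Definition omatmulF (X Y : OMat K) : OMat K := fun i j =>
  oadd (omul (X i (o3 0)) (Y (o3 0) j))
    (oadd (omul (X i (o3 1)) (Y (o3 1) j)) (omul (X i (o3 2)) (Y (o3 2) j))).
Definition unhermF (M : OMat K) (i : nat) : K :=
    (if (i < 3)%N then octCoord (M (o3 i) (o3 i)) 0
     else if (i < 11)%N then octCoord (M (o3 1) (o3 2)) (i - 3)
     else if (i < 19)%N then octCoord (M (o3 2) (o3 0)) (i - 11)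
     else octCoord (M (o3 0) (o3 1)) (i - 19)).
Definition prodF (f g : nat -> K) (i : nat) : K :=
  unhermF (fun a b => oscale (1 / 2%:R) (oadd (omatmulF (hermF f) (hermF g) a b) (omatmulF (hermF g) (hermF f) a b))) i.
Lemma E3prodF (u v : E3 K) z (i : 'I_27) : E3prod u v z i = prodF (vc u) (vc v) i.
Proof.
rewrite /E3prod /unherm mxE /prodF /unhermF /omatmul /omatmulF.
case: ifP => h; first by rewrite !inord_o3.
by rewrite !(inord_o3 (n:=0)) // !(inord_o3 (n:=1)) // !(inord_o3 (n:=2)).
Qed.
End F.

Section Map.
Variable phi : {rmorphism rat -> Cc}.
Definition omap (x : Oct rat) : Oct Cc :=
  match x with (((a0, a1), (a2, a3)), ((a4, a5), (a6, a7))) =>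
   (((phi a0, phi a1), (phi a2, phi a3)), ((phi a4, phi a5), (phi a6, phi a7))) end.
Ltac dst x := case: x => [[[? ?] [? ?]] [[? ?] [? ?]]].
Ltac mp := rewrite /oC /o0 /mkOct /oadd /omul /oscale /oconj /=; rewrite ?(rmorphD, rmorphN, rmorphM, rmorph0, rmorph1).
Lemma omap_add x y : omap (oadd x y) = oadd (omap x) (omap y).
Proof. dst x; dst y; mp; done. Qed.
Lemma omap_mul x y : omap (omul x y) = omul (omap x) (omap y).
Proof. dst x; dst y; mp; done. Qed.
Lemma omap_conj x : omap (oconj x) = oconj (omap x).
Proof. dst x; mp; done. Qed.
Lemma omap_scale c x : omap (oscale c x) = oscale (phi c) (omap x).
Proof. dst x; mp; done. Qed.
Lemma omap_C c : omap (oC c) = oC (phi c).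
Proof. mp; done. Qed.
Lemma omap_0 : omap (o0 rat) = o0 Cc.
Proof. mp; done. Qed.
Lemma octCoord_map x k : octCoord (omap x) k = phi (octCoord x k).
Proof. dst x; do 8 (case: k => [|k]; first by []); by rewrite /= !nth_nil rmorph0. Qed.

Lemma hermF_map (f : nat -> Cc) (f' : nat -> rat) :
  (forall m, (m < 27)%N -> f m = phi (f' m)) -> forall i j, hermF f i j = omap (hermF f' i j).
Proof.
move=> Hf i j; rewrite /hermF; case: i => [[|[|[|i]]] Hi] /=; case: j => [[|[|[|j]]] Hj] /=;
  rewrite /oC /o0 /mkOct /oscale /oconj /= ?Hf // ?rmorphM ?rmorphN ?rmorph1 ?rmorph0 //.
Qed.

Lemma prodF_map (f g : nat -> Cc) (f' g' : nat -> rat) i :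
  (forall m, (m < 27)%N -> f m = phi (f' m)) -> (forall m, (m < 27)%N -> g m = phi (g' m)) ->
  prodF f g i = phi (prodF f' g' i).
Proof.
move=> Hf Hg; rewrite /prodF /unhermF /omatmulF !(hermF_map Hf) !(hermF_map Hg).
have h2 : phi (1 / 2%:R) = 1 / 2%:R by rewrite fmorph_div rmorph1 rmorph_nat.
by case: ifP => _; [|case: ifP => _; [|case: ifP => _]];
  rewrite -!omap_mul -!omap_add -h2 -omap_scale octCoord_map.
Qed.
End Map.

Definition epsC (n : nat) : E3 Cc := \row_(i < 27) (if (i == n :> nat) then 1 else 0).
Definition epsF (n m : nat) : rat := if m == n then 1 else 0.
Lemma vc_eps n m : (m < 27)%N -> vc (epsC n) m = ratr (epsF n m).
Proof. by move=> h; rewrite /vc mxE inordK // /epsF; case: eqP; rewrite ?rmorph1 ?rmorph0. Qed.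

Lemma prod_eps i j (tF : nat -> rat) :
  all (fun t => prodF (epsF i) (epsF j) t == tF t) (iota 0 27) ->
  E3prod (epsC i) (epsC j) = \row_(t < 27) ratr (tF t).
Proof.
move=> /allP H; apply/rowP => t; rewrite E3prodF mxE (prodF_map (phi := ratr) (f' := epsF i) (g' := epsF j)).
- by congr ratr; apply/eqP; apply: H; rewrite mem_iota add0n ltn_ord.
- exact: vc_eps.
- exact: vc_eps.
Qed.

Definition tgt (k : nat) (c : rat) (t : nat) : rat := if t == k then c else 0.
Definition hC : Cc := 1 / 2%:R.
Lemma ratr_h : ratr (1 / 2%:R : rat) = hC :> Cc.
Proof. by rewrite fmorph_div rmorph1 rmorph_nat. Qed.
Lemma ratr_mh : ratr (- (1 / 2%:R) : rat) = - hC :> Cc.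
Proof. by rewrite rmorphN fmorph_div rmorph1 rmorph_nat. Qed.

Lemma prodk i j k (cQ : rat) (cC : Cc) : ratr cQ = cC ->
  all (fun t => prodF (epsF i) (epsF j) t == tgt k cQ t) (iota 0 27) ->
  E3prod (epsC i) (epsC j) = cC *: epsC k.
Proof.
move=> hc H; rewrite (prod_eps H); apply/rowP => t; rewrite !mxE /tgt.
by case: eqP => _; rewrite ?mulr1 ?mulr0 ?rmorph0.
Qed.

Lemma prod2 i j k1 k2 :
  all (fun t => prodF (epsF i) (epsF j) t == tgt k1 1 t + tgt k2 1 t) (iota 0 27) ->
  E3prod (epsC i) (epsC j) = epsC k1 + epsC k2.
Proof.
move=> H; rewrite (prod_eps H); apply/rowP => t; rewrite !mxE /tgt rmorphD.
by case: eqP => _; case: eqP => _; rewrite ?rmorph1 ?rmorph0.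
Qed.

Ltac pk := first [ apply: prodk; [exact: ratr_h | by vm_compute]
                 | apply: prodk; [exact: ratr_mh | by vm_compute]
                 | apply: prodk; [exact: rmorph1 | by vm_compute]
                 | apply: prodk; [exact: rmorph0 | by vm_compute] ].

Lemma p00 : E3prod (epsC 0) (epsC 0) = 1 *: epsC 0. Proof. pk. Qed.
Lemma p11 : E3prod (epsC 1) (epsC 1) = 1 *: epsC 1. Proof. pk. Qed.
Lemma p22 : E3prod (epsC 2) (epsC 2) = 1 *: epsC 2. Proof. pk. Qed.
Lemma p01 : E3prod (epsC 0) (epsC 1) = 0 *: epsC 1. Proof. pk. Qed.
Lemma p12 : E3prod (epsC 1) (epsC 2) = 0 *: epsC 2. Proof. pk. Qed.
Lemma p02 : E3prod (epsC 0) (epsC 2) = 0 *: epsC 2. Proof. pk. Qed.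
Lemma r1 : E3prod (epsC 20) (epsC 5) = - hC *: epsC 14. Proof. pk. Qed.
Lemma r2 : E3prod (epsC 15) (epsC 19) = - hC *: epsC 7. Proof. pk. Qed.
Lemma r3 : E3prod (epsC 14) (epsC 7) = hC *: epsC 26. Proof. pk. Qed.
Lemma r4 : E3prod (epsC 26) (epsC 3) = - hC *: epsC 18. Proof. pk. Qed.
Lemma r5 : E3prod (epsC 5) (epsC 15) = - hC *: epsC 25. Proof. pk. Qed.
Lemma r6 : E3prod (epsC 19) (epsC 3) = hC *: epsC 11. Proof. pk. Qed.
Lemma r7 : E3prod (epsC 25) (epsC 11) = - hC *: epsC 9. Proof. pk. Qed.
Lemma r8 : E3prod (epsC 20) (epsC 9) = hC *: epsC 18. Proof. pk. Qed.
Lemma r9 : E3prod (epsC 18) (epsC 10) = - hC *: epsC 19. Proof. pk. Qed.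
Lemma s19 : E3prod (epsC 19) (epsC 19) = epsC 0 + epsC 1. Proof. apply: prod2; by vm_compute. Qed.
Lemma s11 : E3prod (epsC 11) (epsC 11) = epsC 0 + epsC 2. Proof. apply: prod2; by vm_compute. Qed.
Lemma pe_0_5 : E3prod (epsC 0) (epsC 5) = 0 *: epsC 5. Proof. pk. Qed.
Lemma pe_1_5 : E3prod (epsC 1) (epsC 5) = hC *: epsC 5. Proof. pk. Qed.
Lemma pe_2_19 : E3prod (epsC 2) (epsC 19) = 0 *: epsC 19. Proof. pk. Qed.
Lemma pe_0_19 : E3prod (epsC 0) (epsC 19) = hC *: epsC 19. Proof. pk. Qed.
Lemma pe_1_19 : E3prod (epsC 1) (epsC 19) = hC *: epsC 19. Proof. pk. Qed.
Lemma pe_0_7 : E3prod (epsC 0) (epsC 7) = 0 *: epsC 7. Proof. pk. Qed.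
Lemma pe_2_7 : E3prod (epsC 2) (epsC 7) = hC *: epsC 7. Proof. pk. Qed.
Lemma pe_0_3 : E3prod (epsC 0) (epsC 3) = 0 *: epsC 3. Proof. pk. Qed.
Lemma pe_1_3 : E3prod (epsC 1) (epsC 3) = hC *: epsC 3. Proof. pk. Qed.
Lemma pe_1_15 : E3prod (epsC 1) (epsC 15) = 0 *: epsC 15. Proof. pk. Qed.
Lemma pe_2_15 : E3prod (epsC 2) (epsC 15) = hC *: epsC 15. Proof. pk. Qed.
Lemma pe_1_11 : E3prod (epsC 1) (epsC 11) = 0 *: epsC 11. Proof. pk. Qed.
Lemma pe_0_11 : E3prod (epsC 0) (epsC 11) = hC *: epsC 11. Proof. pk. Qed.
Lemma pe_0_9 : E3prod (epsC 0) (epsC 9) = 0 *: epsC 9. Proof. pk. Qed.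
Lemma pe_1_9 : E3prod (epsC 1) (epsC 9) = hC *: epsC 9. Proof. pk. Qed.
Lemma pe_0_10 : E3prod (epsC 0) (epsC 10) = 0 *: epsC 10. Proof. pk. Qed.
Lemma pe_2_10 : E3prod (epsC 2) (epsC 10) = hC *: epsC 10. Proof. pk. Qed.


Lemma two : (2%:R : Cc) != 0.
Proof. by rewrite pnatr_eq0. Qed.
Lemma hh (a : Cc) : hC * (a + a) = a.
Proof. by rewrite /hC; field. Qed.

Ltac dst5 x := case: x => [[[? ?] [? ?]] [[? ?] [? ?]]].
Ltac octring5 := rewrite /oC /o0 /mkOct /oadd /omul /oscale /oconj /=; congr (((_,_),(_,_)),((_,_),(_,_))); ring.

Lemma omul1l (y : Oct Cc) : omul (oC 1) y = y. Proof. dst5 y; octring5. Qed.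
Lemma omul1r (y : Oct Cc) : omul y (oC 1) = y. Proof. dst5 y; octring5. Qed.
Lemma omul0l' (y : Oct Cc) : omul (o0 Cc) y = o0 Cc. Proof. dst5 y; octring5. Qed.
Lemma omul0r' (y : Oct Cc) : omul y (o0 Cc) = o0 Cc. Proof. dst5 y; octring5. Qed.
Lemma oadd0l (y : Oct Cc) : oadd (o0 Cc) y = y. Proof. dst5 y; octring5. Qed.
Lemma oadd0r (y : Oct Cc) : oadd y (o0 Cc) = y. Proof. dst5 y; octring5. Qed.
Lemma ohalf (y : Oct Cc) : oscale hC (oadd y y) = y.
Proof. dst5 y; by rewrite /oadd /oscale /= !hh. Qed.

Definition eC : E3 Cc := epsC 0 + epsC 1 + epsC 2.
Lemma vc_eC m : (m < 27)%N -> vc eC m = (if m == 0%N then 1 else 0) + (if m == 1%N then 1 else 0) + (if m == 2%N then 1 else 0).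
Proof. by move=> h; rewrite /vc !mxE inordK. Qed.

Lemma heC i j : hermF (vc eC) i j = if i == j then oC 1 else o0 Cc.
Proof.
rewrite /hermF; case: i => [[|[|[|i]]] Hi] //=; case: j => [[|[|[|j]]] Hj] //=;
 rewrite /oC /o0 /mkOct /oconj /oscale /= !vc_eC //= ?addr0 ?add0r ?oppr0 //.
Qed.

Lemma o3_ord (n : nat) (H : (n < 3)%N) : o3 n = Ordinal H.
Proof. by apply: val_inj; case: n H => [|[|[|n]]]. Qed.

Lemma mm_eC_l (Y : OMat Cc) i j : omatmulF (hermF (vc eC)) Y i j = Y i j.
Proof.
rewrite /omatmulF !heC; case: i => [[|[|[|i]]] Hi] //=;
 rewrite ?omul1l ?omul0l' ?oadd0l ?oadd0r; by congr (Y _ _); apply: val_inj.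
Qed.
Lemma mm_eC_r (Y : OMat Cc) i j : omatmulF Y (hermF (vc eC)) i j = Y i j.
Proof.
rewrite /omatmulF !heC; case: j => [[|[|[|j]]] Hj] //=;
 rewrite ?omul1r ?omul0r' ?oadd0l ?oadd0r; by congr (Y _ _); apply: val_inj.
Qed.

Lemma unhermF_herm (g : nat -> Cc) (t : nat) : (t < 27)%N -> unhermF (hermF g) t = g t.
Proof.
move=> Ht; do 27 (case: t Ht => [|t] Ht; [by rewrite /unhermF /= ?mulr1 | ]); by [].
Qed.

Lemma G3 (a : E3 Cc) : E3prod eC a = a.
Proof.
apply/rowP => t; rewrite E3prodF /prodF.
have -> : unhermF (fun a0 b => oscale (1 / 2%:R) (oadd (omatmulF (hermF (vc eC)) (hermF (vc a)) a0 b)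
          (omatmulF (hermF (vc a)) (hermF (vc eC)) a0 b))) t = unhermF (hermF (vc a)) t.
  by rewrite /unhermF mm_eC_l mm_eC_r ohalf mm_eC_l mm_eC_r ohalf !mm_eC_l !mm_eC_r !ohalf.
rewrite unhermF_herm // /vc inord_val; congr (a _ _); exact/val_inj.
Qed.


Lemma hC_neq0 : hC != 0.
Proof. by rewrite /hC div1r invr_eq0 two. Qed.
Lemma hChC : hC + hC = 1.
Proof. by rewrite /hC; field. Qed.

Section NS.
Variable V : lmodType Cc.
Variable Q : E3 Cc -> V -> V.
Hypothesis QZD : forall c a b v, Q (c *: a + b) v = c *: Q a v + Q b v.
Hypothesis QvZD : forall a c v w, Q a (c *: v + w) = c *: Q a v + Q a w.
Hypothesis QJ : forall a b v, Q (E3prod a b) v = hC *: (Q a (Q b v) + Q b (Q a v)).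

Lemma dbl0 (x : V) : x + x = 0 -> x = 0.
Proof. move=> h; have : hC *: (x + x) = x by rewrite scalerDr -scalerDl hChC scale1r.
by rewrite h scaler0 => <-. Qed.
Lemma hinj (x y : V) : hC *: x = hC *: y -> x = y.
Proof. exact: (scalerI hC_neq0). Qed.

Lemma Qv0 a : Q a 0 = 0.
Proof. have := QvZD a 1 0 0; rewrite !scale1r addr0 => h. by apply: (addrI (Q a 0)); rewrite addr0 -h. Qed.
Lemma QvZ a c v : Q a (c *: v) = c *: Q a v.
Proof. by have := QvZD a c v 0; rewrite !addr0 Qv0 addr0. Qed.
Lemma QvD a v w : Q a (v + w) = Q a v + Q a w.
Proof. by have := QvZD a 1 v w; rewrite !scale1r. Qed.
Lemma QvN a v : Q a (- v) = - Q a v.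
Proof. by rewrite -scaleN1r QvZ scaleN1r. Qed.
Lemma Q0 v : Q 0 v = 0.
Proof. have := QZD 1 0 0 v; rewrite !scale1r addr0 => h. by apply: (addrI (Q 0 v)); rewrite addr0 -h. Qed.
Lemma QZ c a v : Q (c *: a) v = c *: Q a v.
Proof. by have := QZD c a 0 v; rewrite !addr0 Q0 addr0. Qed.
Lemma QD a b v : Q (a + b) v = Q a v + Q b v.
Proof. by have := QZD 1 a b v; rewrite !scale1r. Qed.

Local Notation q n := (Q (epsC n%N)).

Lemma JF i j k c : E3prod (epsC i) (epsC j) = c *: epsC k ->
  forall v, c *: q k v = hC *: (q i (q j v) + q j (q i v)).
Proof. by move=> h v; rewrite -QJ h QZ. Qed.

Lemma idemF d : E3prod (epsC d) (epsC d) = 1 *: epsC d -> forall v, q d (q d v) = q d v.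
Proof. move=> h v; have := JF h v; rewrite scale1r scalerDr -scalerDl hChC scale1r. by move/esym. Qed.

Lemma halfF d n : E3prod (epsC d) (epsC n) = hC *: epsC n -> forall v, q d (q n v) + q n (q d v) = q n v.
Proof. by move=> h v; apply: hinj; rewrite -(JF h). Qed.

Lemma zeroF d n : E3prod (epsC d) (epsC n) = 0 *: epsC n -> forall v, q d (q n v) + q n (q d v) = 0.
Proof. by move=> h v; apply: hinj; rewrite -(JF h) !scale0r scaler0. Qed.

Lemma killF i n : (forall v, q i (q i v) = q i v) -> (forall v, q i (q n v) + q n (q i v) = 0) ->
  forall v, q i (q n v) = 0.
Proof.
move=> Hi H v.
have H' : forall u, q i (q n u) = - q n (q i u) by move=> u; apply/eqP; rewrite -subr_eq0 opprK H.
have e : q i (q n v) = q n (q i v).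
  transitivity (q i (q i (q n v))); first by rewrite Hi.
  rewrite [q i (q n v)]H' QvN [q i (q n (q i v))]H' opprK.
  by rewrite Hi.
by apply: dbl0; rewrite {2}e H.
Qed.

Lemma transF J K n : (forall v, q J (q n v) + q n (q J v) = q n v) -> (forall v, q J (q K v) = 0) ->
  forall v, q n (q K v) = q J (q n (q K v)).
Proof. by move=> H HJK v; rewrite -{1}H HJK Qv0 addr0. Qed.

Lemma chainF nx ny nz I J K c : E3prod (epsC nx) (epsC ny) = c *: epsC nz ->
  (forall v, q I (q ny v) = 0) -> (forall v, q ny (q K v) = q J (q ny (q K v))) ->
  forall v, c *: q I (q nz (q K v)) = hC *: q I (q nx (q J (q ny (q K v)))).
Proof.
move=> h HI HT v; have := JF h (q K v) => e.
rewrite -[LHS]QvZ e QvZ QvD HI addr0.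
by rewrite {1}HT.
Qed.

Lemma chainP nx ny nz I J K : E3prod (epsC nx) (epsC ny) = hC *: epsC nz ->
  (forall v, q I (q ny v) = 0) -> (forall v, q ny (q K v) = q J (q ny (q K v))) ->
  forall v, q I (q nz (q K v)) = q I (q nx (q J (q ny (q K v)))).
Proof. by move=> h HI HT v; apply: hinj; apply: chainF h HI HT v. Qed.

Lemma chainN nx ny nz I J K : E3prod (epsC nx) (epsC ny) = - hC *: epsC nz ->
  (forall v, q I (q ny v) = 0) -> (forall v, q ny (q K v) = q J (q ny (q K v))) ->
  forall v, q I (q nz (q K v)) = - q I (q nx (q J (q ny (q K v)))).
Proof.
move=> h HI HT v; apply: hinj; rewrite scalerN -(chainF h HI HT v) scaleNr opprK.
by [].
Qed.

Theorem nonspecial v : Q eC v = 0.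
Proof.
have i0 := idemF p00; have i1 := idemF p11; have i2 := idemF p22.
have o01 := killF i0 (zeroF p01).
have o10 : forall v, q 1 (q 0 v) = 0.
  by apply: killF i1 _ => u; rewrite addrC; exact: (zeroF p01 u).
have o12 := killF i1 (zeroF p12).
have o21 : forall v, q 2 (q 1 v) = 0.
  by apply: killF i2 _ => u; rewrite addrC; exact: (zeroF p12 u).
have o02 := killF i0 (zeroF p02).
have o20 : forall v, q 2 (q 0 v) = 0.
  by apply: killF i2 _ => u; rewrite addrC; exact: (zeroF p02 u).
have R1 := chainN r1 (killF i0 (zeroF pe_0_5)) (transF (halfF pe_1_5) o12).
have R2 := chainN r2 (killF i2 (zeroF pe_2_19)) (transF (halfF pe_0_19) o01).
have R3 := chainP r3 (killF i0 (zeroF pe_0_7)) (transF (halfF pe_2_7) o21).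
have R4 := chainN r4 (killF i0 (zeroF pe_0_3)) (transF (halfF pe_1_3) o12).
have R5 := chainN r5 (killF i1 (zeroF pe_1_15)) (transF (halfF pe_2_15) o20).
have R6 := chainP r6 (killF i0 (zeroF pe_0_3)) (transF (halfF pe_1_3) o12).
have R7 := chainN r7 (killF i1 (zeroF pe_1_11)) (transF (halfF pe_0_11) o02).
have R8 := chainP r8 (killF i0 (zeroF pe_0_9)) (transF (halfF pe_1_9) o12).
have R9 := chainN r9 (killF i0 (zeroF pe_0_10)) (transF (halfF pe_2_10) o21).
have Z18 : forall v, q 0 (q 18 (q 2 v)) = 0.
  move=> u; apply: dbl0.
  have R1' : forall v, q 0 (q 20 (q 1 (q 5 (q 2 v)))) = - q 0 (q 14 (q 2 v)) by move=> w; rewrite R1 opprK.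
  have R2' : forall v, q 2 (q 15 (q 0 (q 19 (q 1 v)))) = - q 2 (q 7 (q 1 v)) by move=> w; rewrite R2 opprK.
  have R5' : forall v, q 1 (q 5 (q 2 (q 15 (q 0 v)))) = - q 1 (q 25 (q 0 v)) by move=> w; rewrite R5 opprK.
  have G1 : q 0 (q 20 (q 1 (q 5 (q 2 (q 15 (q 0 (q 19 (q 1 (q 3 (q 2 u)))))))))) = - q 0 (q 18 (q 2 u)).
    by rewrite R1' R2' QvN QvN opprK -R3 R4 opprK.
  have G2 : q 0 (q 20 (q 1 (q 5 (q 2 (q 15 (q 0 (q 19 (q 1 (q 3 (q 2 u)))))))))) = q 0 (q 18 (q 2 u)).
    have R7' : forall v, q 1 (q 25 (q 0 (q 11 (q 2 v)))) = - q 1 (q 9 (q 2 v)) by move=> w; rewrite R7 opprK.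
    by rewrite -R6 R5' QvN R7' !QvN opprK -R8.
  by rewrite -{1}G2 G1 addNr.
have Z19 : forall v, q 0 (q 19 (q 1 v)) = 0.
  by move=> u; rewrite R9 Z18 oppr0.
have h19_0 := halfF pe_0_19; have h19_1 := halfF pe_1_19.
have a1 : forall w, q 0 (q 19 w) = 0.
  by move=> u; rewrite -(h19_1 u) QvD o01 Z19 addr0.
have A : forall v, q 19 v = q 1 (q 19 (q 0 v)).
  move=> u.
  have a2 : q 19 u = q 19 (q 0 u) by rewrite -(h19_0 u) a1 add0r.
  by rewrite a2 -{1}(h19_1 (q 0 u)) o10 Qv0 addr0.
have S19 : forall v, q 0 v + q 1 v = 0.
  move=> u; rewrite -QD -s19 QJ.
  by rewrite (A (q 19 u)) a1 Qv0 Qv0 addr0 scaler0.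
have Z0 : forall v, q 0 v = 0.
  by move=> u; rewrite -(i0 u); have := S19 (q 0 u); rewrite o10 addr0.
have Z1 : forall v, q 1 v = 0.
  by move=> u; have := S19 u; rewrite Z0 add0r.
have Z2 : forall v, q 2 v = 0.
  move=> u.
  have a11 : forall w, q 11 w = 0.
    by move=> w; rewrite -(halfF pe_0_11 w) Z0 Z0 Qv0 addr0.
  have := QD (epsC 0%N) (epsC 2%N) u; rewrite -s11 QJ !a11 addr0 scaler0 Z0 add0r.
  by move/esym.
by rewrite /eC !QD Z0 Z1 Z2 !addr0.
Qed.
End NS.


Definition Xe (a : E3 Cc) : Lel (E3 Cc) := mkL a (@zf Cc (E3 Cc)) (@zb Cc (E3 Cc)).
Definition Le (a : E3 Cc) : Lel (E3 Cc) := mkL 0 (Lmul (@E3prod Cc) a) (@zb Cc (E3 Cc)).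
Definition Ye : Lel (E3 Cc) := mkL 0 (@zf Cc (E3 Cc)) (Abar (@E3prod Cc)).

Lemma inLX a : inL (@E3prod Cc) (Xe a).
Proof. split; [exists [::], [::] => x | exists [::], [::] => x y]; by rewrite !big_nil addr0. Qed.
Lemma inLL a : inL (@E3prod Cc) (Le a).
Proof.
split; [exists [:: (1, a)], [::] => x | exists [::], [::] => x y].
  by rewrite big_cons !big_nil scale1r !addr0.
by rewrite !big_nil addr0.
Qed.
Lemma inLY : inL (@E3prod Cc) Ye.
Proof.
split; [exists [::], [::] => x | exists [:: 1], [::] => x y].
  by rewrite !big_nil addr0.
by rewrite big_cons !big_nil scale1r !addr0.
Qed.

Lemma LbrYX a : Lbr Ye (Xe a) = Le a.
Proof.
rewrite /Lbr /Ye /Xe /Le /=; congr mkL.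
- by rewrite /zf subrr.
- apply: functional_extensionality => z.
  by rewrite /fcomm /BAbr /zf /zb /Abar /Lmul subrr add0r subr0.
- apply: functional_extensionality => u; apply: functional_extensionality => w.
  by rewrite /SBbr /zf /zb /Abar E3prod0l E3prod0r !subr0.
Qed.

Lemma LbrLX a b : Lbr (Le a) (Xe b) = Xe (E3prod a b).
Proof.
rewrite /Lbr /Le /Xe /=; congr mkL.
- by rewrite /zf /Lmul subr0.
- apply: functional_extensionality => z.
  by rewrite /fcomm /BAbr /zf /zb /Lmul E3prod0r ?subr0 ?addr0.
- apply: functional_extensionality => u; apply: functional_extensionality => w.
  by rewrite /SBbr /zf /zb /Lmul E3prod0r ?subr0.
Qed.

Lemma linLe c a b : Ladd (Lscale c (Le a)) (Le b) = Le (c *: a + b).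
Proof.
rewrite /Ladd /Lscale /Le /=; congr mkL.
- by rewrite scaler0 addr0.
- apply: functional_extensionality => z; by rewrite /Lmul E3prodZDl.
- apply: functional_extensionality => u; apply: functional_extensionality => w.
  by rewrite /zb scaler0 addr0.
Qed.

Lemma sum12 (V : lmodType Cc) (vs : nat -> V) : \sum_(1 <= j < 3) vs j = vs 1%N + vs 2%N.
Proof. by rewrite big_nat_recr //= big_nat1. Qed.

Section Rep.
Variable V : lmodType Cc.
Variable W : nat -> V -> Prop.
Variable rho : Lel (E3 Cc) -> V -> V.
Hypothesis HG : graded_rep (@E3prod Cc) 2 W rho.

Local Notation X a v := (rho (Xe a) v).
Local Notation L a v := (rho (Le a) v).
Local Notation Y v := (rho Ye v).

Lemma rlin x : inL (@E3prod Cc) x -> forall c u w, rho x (c *: u + w) = c *: rho x u + rho x w.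
Proof. case: HG => [[H _] _]; exact: H. Qed.
Lemma rho0 x : inL (@E3prod Cc) x -> rho x 0 = 0.
Proof. move=> h; have := rlin h 1 0 0; rewrite !scale1r addr0 => e.
by apply: (addrI (rho x 0)); rewrite addr0 -e. Qed.
Lemma rhoD x : inL (@E3prod Cc) x -> forall u w, rho x (u + w) = rho x u + rho x w.
Proof. by move=> h u w; have := rlin h 1 u w; rewrite !scale1r. Qed.
Lemma rhoZ x : inL (@E3prod Cc) x -> forall c u, rho x (c *: u) = c *: rho x u.
Proof. by move=> h c u; have := rlin h c u 0; rewrite addr0 (rho0 h) addr0. Qed.
Lemma rhoN x : inL (@E3prod Cc) x -> forall u, rho x (- u) = - rho x u.
Proof. by move=> h u; rewrite -scaleN1r rhoZ // scaleN1r. Qed.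

Lemma rbr x y : inL (@E3prod Cc) x -> inL (@E3prod Cc) y -> forall v, rho (Lbr x y) v = rho x (rho y v) - rho y (rho x v).
Proof. case: HG => [[_ [_ H]] _]; exact: H. Qed.
Lemma rlinx x y c : inL (@E3prod Cc) x -> inL (@E3prod Cc) y -> forall v, rho (Ladd (Lscale c x) y) v = c *: rho x v + rho y v.
Proof. case: HG => [[_ [H _]] _]; exact: H. Qed.

Lemma Wsub j : (1 <= j <= 2)%N -> subspace (W j).
Proof. by case: HG => [_ [H _]] h; case: (H j h). Qed.

Lemma Wgr i x : homog (@E3prod Cc) i x -> forall j v, (1 <= j <= 2)%N -> W j v -> Vext 2 W (i + j%:Z) (rho x v).
Proof. case: HG => [_ [_ [_ [_ H]]]]; exact: H. Qed.

Lemma hX a : homog (@E3prod Cc) (-1) (Xe a). Proof. by left; split => //; exists a. Qed.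
Lemma hL a : homog (@E3prod Cc) 0 (Le a).
Proof. right; left; split => //; exists (Lmul (@E3prod Cc) a); split => //; exact: (inLL a).1. Qed.
Lemma hY : homog (@E3prod Cc) 1 Ye.
Proof. right; right; split => //; exists (Abar (@E3prod Cc)); split => //; exact: inLY.2. Qed.

Lemma GX1 a v : W 1 v -> X a v = 0.
Proof. by move=> h; have := Wgr (hX a) (j := 1) isT h; rewrite /Vext. Qed.
Lemma GX2 a v : W 2 v -> W 1 (X a v).
Proof. by move=> h; have := Wgr (hX a) (j := 2) isT h; rewrite /Vext. Qed.
Lemma GY1 v : W 1 v -> W 2 (Y v).
Proof. by move=> h; have := Wgr hY (j := 1) isT h; rewrite /Vext. Qed.
Lemma GY2 v : W 2 v -> Y v = 0.
Proof. by move=> h; have := Wgr hY (j := 2) isT h; rewrite /Vext. Qed.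
Lemma GL1 a v : W 1 v -> W 1 (L a v).
Proof. by move=> h; have := Wgr (hL a) (j := 1) isT h; rewrite /Vext. Qed.
Lemma GL2 a v : W 2 v -> W 2 (L a v).
Proof. by move=> h; have := Wgr (hL a) (j := 2) isT h; rewrite /Vext. Qed.

Lemma R1 a v : L a v = Y (X a v) - X a (Y v).
Proof. by rewrite -LbrYX rbr //; [exact: inLY | exact: inLX]. Qed.
Lemma R2 a b v : X (E3prod a b) v = L a (X b v) - X b (L a v).
Proof. by rewrite -LbrLX rbr //; [exact: inLL | exact: inLX]. Qed.
Lemma Llin c a b v : L (c *: a + b) v = c *: L a v + L b v.
Proof. by rewrite -linLe rlinx //; exact: inLL. Qed.


Lemma dec v : exists v1 v2, W 1 v1 /\ W 2 v2 /\ v = v1 + v2.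
Proof.
case: HG => [_ [_ [Hd _]]]; case: (Hd v) => vs [Hvs ->].
by exists (vs 1%N), (vs 2%N); rewrite sum12; split; [apply: Hvs | split; [apply: Hvs|]].
Qed.

Lemma W0 j : (1 <= j <= 2)%N -> W j 0.
Proof. by move=> h; case: (Wsub h). Qed.
Lemma WZD j c u w : (1 <= j <= 2)%N -> W j u -> W j w -> W j (c *: u + w).
Proof. by move=> h; case: (Wsub h) => _; apply. Qed.
Lemma WB j u w : (1 <= j <= 2)%N -> W j u -> W j w -> W j (u - w).
Proof. by move=> h Hu Hw; rewrite addrC -scaleN1r; apply: WZD. Qed.

Lemma uniq2 a b a' b' : W 1 a -> W 2 b -> W 1 a' -> W 2 b' -> a + b = a' + b' -> b = b'.
Proof.
move=> Ha Hb Ha' Hb' e.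
case: HG => [_ [_ [_ [Hu _]]]].
pose vs j := if j == 1%N then a - a' else b - b'.
have H1 : forall j, (1 <= j <= 2)%N -> W j (vs j).
  by move=> [|[|[|j]]] //= _; rewrite /vs /=; apply: WB.
have H2 : \sum_(1 <= j < 3) vs j = 0.
  by rewrite sum12 /vs /= addrACA e addrACA !subrr addr0.
by apply/eqP; rewrite -subr_eq0; have := Hu vs H1 H2 2%N isT; rewrite /vs /= => ->.
Qed.

Lemma dec2 v : exists v2, W 2 v2 /\ exists v1, W 1 v1 /\ v = v1 + v2.
Proof. by case: (dec v) => v1 [v2 [h1 [h2 e]]]; exists v2; split => //; exists v1. Qed.

Definition pi2 v : V := proj1_sig (constructive_indefinite_description _ (dec2 v)).
Lemma pi2P v : W 2 (pi2 v) /\ exists v1, W 1 v1 /\ v = v1 + pi2 v.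
Proof. exact: (proj2_sig (constructive_indefinite_description _ (dec2 v))). Qed.
Lemma pi2_W2 w : W 2 w -> pi2 w = w.
Proof.
move=> h; case: (pi2P w) => h2 [v1 [h1 e]].
apply: esym; apply: (uniq2 (W0 (j:=1) isT) h h1 h2); by rewrite add0r.
Qed.
Lemma pi2_lin c v w : pi2 (c *: v + w) = c *: pi2 v + pi2 w.
Proof.
case: (pi2P v) => hv [v1 [hv1 ev]]; case: (pi2P w) => hw [w1 [hw1 ew]].
case: (pi2P (c *: v + w)) => hx [x1 [hx1 ex]].
apply: esym; apply: (uniq2 (a := c *: v1 + w1) (a' := x1)) => //.
- exact: WZD.
- exact: WZD.
- by rewrite -ex [in RHS]ev [in RHS]ew scalerDr addrACA.
Qed.

Lemma LW2 c u : W 2 u -> L c u = Y (X c u).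
Proof. by move=> h; rewrite R1 (GY2 h) (rho0 (inLX c)) subr0. Qed.
Lemma LW1 c u : W 1 u -> L c u = - X c (Y u).
Proof. by move=> h; rewrite R1 (GX1 c h) (rho0 inLY) sub0r. Qed.

Lemma Jid a b w : W 2 w -> L a (L b w) + L b (L a w) = - L (E3prod a b) w.
Proof.
move=> h.
have hu : W 1 (X b w) by exact: GX2.
have e1 : L a (L b w) = - Y (L a (X b w)).
  rewrite (LW2 b h) (LW2 a (GY1 hu)).
  have e : X a (Y (X b w)) = - L a (X b w) by rewrite (LW1 a hu) opprK.
  by rewrite e (rhoN inLY).
have e2 : L a (X b w) = X (E3prod a b) w + X b (L a w) by rewrite R2 subrK.
rewrite e1 e2 (rhoD inLY) -(LW2 _ h) -(LW2 _ (GL2 a h)).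
by rewrite opprD subrK.
Qed.

Definition Qr a v := (- 2%:R : Cc) *: L a (pi2 v).

Lemma Qr_ZD c a b v : Qr (c *: a + b) v = c *: Qr a v + Qr b v.
Proof. by rewrite /Qr Llin scalerDr !scalerA mulrC. Qed.
Lemma Qr_vZD a c v w : Qr a (c *: v + w) = c *: Qr a v + Qr a w.
Proof. by rewrite /Qr pi2_lin (rlin (inLL a)) scalerDr !scalerA mulrC. Qed.

Lemma Qr_J a b v : Qr (E3prod a b) v = hC *: (Qr a (Qr b v) + Qr b (Qr a v)).
Proof.
case: (pi2P v) => hw _; set w := pi2 v.
have p2 : forall c, pi2 ((- 2%:R) *: L c w) = (- 2%:R) *: L c w.
  by move=> c; apply: pi2_W2; rewrite -[_ *: _]addr0; apply: WZD => //; [exact: GL2 | exact: W0].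
rewrite /Qr -/w !p2 !(rhoZ (inLL _)) !scalerA -scalerDr Jid // scalerN -scaleNr.
by rewrite scalerA; congr (_ *: _); rewrite /hC; field.
Qed.

Lemma LeC w : W 2 w -> L eC w = 0.
Proof.
move=> h; have := nonspecial Qr_ZD Qr_vZD Qr_J w; rewrite /Qr pi2_W2 //.
move/eqP; rewrite scaler_eq0 => /orP [|/eqP //].
by rewrite oppr_eq0 (negbTE two).
Qed.

Lemma XeC v : X eC v = 0.
Proof.
case: (dec v) => v1 [v2 [h1 [h2 ->]]]; rewrite (rhoD (inLX _)) (GX1 _ h1) add0r.
have := R2 eC eC v2; rewrite G3 => ->.
rewrite (LeC h2) (rho0 (inLX _)) subr0 (LW1 _ (GX2 _ h2)) -(LW2 _ h2) (LeC h2).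
by rewrite (rho0 (inLX _)) oppr0.
Qed.

Lemma Xzero a v : X a v = 0.
Proof.
case: (dec v) => v1 [v2 [h1 [h2 ->]]]; rewrite (rhoD (inLX _)) (GX1 _ h1) add0r.
have := R2 eC a v2; rewrite G3 => ->.
rewrite (LeC h2) (rho0 (inLX _)) subr0 (LW1 _ (GX2 _ h2)).
by rewrite XeC oppr0.
Qed.

End Rep.

Theorem mainTheorem6 (V : lmodType Cc) (W : nat -> V -> Prop)
    (rho : Lel (E3 Cc) -> V -> V) :
  ~ (graded_rep (@E3prod Cc) 2 W rho /\
     exists (a : E3 Cc) (v : V), rho (mkL a (@zf Cc (E3 Cc)) (@zb Cc (E3 Cc))) v <> 0).
Proof.
move=> [HG [a [v Hv]]]; apply: Hv; exact: (Xzero HG a v).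
Qed.
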